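(* Every object $(X,E)$ of $\mathsf{StoneE}^\mathsf{R}$ is isomorphic in $\mathsf{StoneE}^\mathsf{R}$ to the Gleason space $\mathcal G(X/E)$. Consequently the functor $\mathcal G\colon\mathsf{KHaus}^\mathsf{R}\to\mathsf{Gle}^\mathsf{R}$ is a quasi-inverse of $\mathcal Q\colon\mathsf{Gle}^\mathsf{R}\to\mathsf{KHaus}^\mathsf{R}$ (natural isomorphisms $\mathrm{id}_{\mathsf{Gle}^\mathsf{R}}\cong\mathcal G\circ\mathcal Q$ and $\mathrm{id}_{\mathsf{KHaus}^\mathsf{R}}\cong\mathcal Q\circ\mathcal G$), and the inclusion of $\mathsf{Gle}^\mathsf{R}$ into $\mathsf{StoneE}^\mathsf{R}$ is an equivalence of allegories.
   Context: $\mathsf{KHaus}^\mathsf{R}$: compact Hausdorff spaces and closed relations, relational composition, ordered by inclusion, dagger converse. $\mathsf{StoneE}^\mathsf{R}$: objects $(X,E)$ with $X$ a Stone space and $E$ a closed equivalence relation on $X$; morphisms $(X,E)\to(X',E')$ closed relations $R\subseteq X\times X'$ with $R\circ E=R=E'\circ R$; identity $E$; relational composition; ordered by inclusion; dagger converse. A Gleason space is an object $(X,E)$ of $\mathsf{StoneE}^\mathsf{R}$ with $X$ extremally disconnected and $E$ irreducible (for every proper closed $F\subsetneq X$, $E[F]\neq X$); $\mathsf{Gle}^\mathsf{R}$ is the full subcategory on Gleason spaces. $\mathcal Q$ sends $(X,E)$ to $X/E$ and $R$ to $\pi'\circ R\circ\breve\pi$ with $\pi,\pi'$ the quotient maps.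 For a compact Hausdorff space $X$, $g_X\colon\widehat X\to X$ denotes its Gleason cover (the extremally disconnected compact Hausdorff space $\widehat X$ with the irreducible continuous surjection $g_X$). $\mathcal G(X)=(\widehat X,E_X)$ where $x\mathrel{E_X}y\iff g_X(x)=g_X(y)$, and for a closed relation $R\colon X\to X'$, $\mathcal G(R)=\breve g_{X'}\circ R\circ g_X$, i.e.\ $x\mathrel{\mathcal G(R)}x'\iff g_X(x)\mathrel{R}g_{X'}(x')$. An equivalence of allegories is an equivalence of categories preserving binary meets of morphisms and daggers. *)

(* Defs.v *)
From HB Require Import structures.
From mathcomp Require Import all_boot all_order all_algebra.
From mathcomp Require Import all_classical.
From mathcomp Require Import topology quotient_topology generic_quotient.

Set Implicit Arguments.
Unset Strict Implicit.
Unset Printing Implicit Defensive.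

Local Open Scope classical_set_scope.
Local Open Scope quotient_scope.

Definition hrel (X Y : Type) := X -> Y -> Prop.

(** relational composition, written as in the paper: [rcomp S R] is [S ∘ R],
    i.e. first [R], then [S]. *)
Definition rcomp {X Y Z : Type} (S : hrel Y Z) (R : hrel X Y) : hrel X Z :=
  fun x z => exists y, R x y /\ S y z.

Definition rconv {X Y : Type} (R : hrel X Y) : hrel Y X := fun y x => R x y.

Definition rgraph {X Y : Type} (f : X -> Y) : hrel X Y := fun x y => f x = y.

Definition rdiag (X : Type) : hrel X X := fun x y => x = y.

Definition releq {X Y : Type} (R S : hrel X Y) := forall x y, R x y <-> S x y.

Definition rimage {X Y : Type} (R : hrel X Y) (F : set X) : set Y :=
  [set y | exists2 x, F x & R x y].

Definition equivalence_rel {X : Type} (E : hrel X X) :=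
  [/\ forall x, E x x, forall x y, E x y -> E y x &
      forall x y z, E x y -> E y z -> E x z].

Definition closed_rel {X Y : topologicalType} (R : hrel X Y) :=
  closed [set p : X * Y | R p.1 p.2].

Definition compact_hausdorff (X : topologicalType) :=
  compact [set: X] /\ hausdorff_space X.

Definition stone_space (X : topologicalType) :=
  compact_hausdorff X /\ totally_disconnected [set: X].

Definition extremally_disconnected (X : topologicalType) :=
  forall U : set X, open U -> open (closure U).

Definition StoneE_obj {X : topologicalType} (E : hrel X X) :=
  [/\ stone_space X, closed_rel E & equivalence_rel E].

Definition StoneE_hom {X Y : topologicalType} (E : hrel X X) (E' : hrel Y Y)
  (R : hrel X Y) :=
  [/\ closed_rel R, releq (rcomp R E) R & releq (rcomp E' R) R].

(** isomorphism (X,E) -> (Y,E') in StoneE^R (the identity of (X,E) is E) *)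
Definition StoneE_iso {X Y : topologicalType} (E : hrel X X) (E' : hrel Y Y)
  (R : hrel X Y) :=
  StoneE_hom E E' R /\
  exists S : hrel Y X,
    [/\ StoneE_hom E' E S, releq (rcomp S R) E & releq (rcomp R S) E'].

Definition irreducible_rel {X : topologicalType} (E : hrel X X) :=
  forall F : set X, closed F -> F <> setT -> rimage E F <> setT.

Definition Gleason_space {X : topologicalType} (E : hrel X X) :=
  [/\ StoneE_obj E, extremally_disconnected X & irreducible_rel E].

Definition KHaus_iso {X Y : topologicalType} (R : hrel X Y) :=
  closed_rel R /\
  exists S : hrel Y X,
    [/\ closed_rel S, releq (rcomp S R) (@rdiag X) & releq (rcomp R S) (@rdiag Y)].

(** we quotient by "having the same E-class", which coincides with E
    whenever E is an equivalence relation (and is always an equivalence,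
    so that the quotient construction is total). *)
Definition class_rel {X : Type} (E : hrel X X) : rel X :=
  fun x y => `[< forall z, E x z <-> E y z >].

Lemma class_rel_refl {X : Type} (E : hrel X X) : reflexive (class_rel E).
Proof. by move=> x; apply/asboolP. Qed.

Lemma class_rel_sym {X : Type} (E : hrel X X) : symmetric (class_rel E).
Proof.
move=> x y; apply/asboolP/asboolP => H z; by split => /H.
Qed.

Lemma class_rel_trans {X : Type} (E : hrel X X) : transitive (class_rel E).
Proof.
move=> y x z /asboolP Hxy /asboolP Hyz; apply/asboolP => w.
by split => [/Hxy/Hyz|/Hyz/Hxy].
Qed.

Definition class_equiv {X : choiceType} (E : hrel X X) : equiv_rel X :=
  EquivRel (class_rel E) (@class_rel_refl _ E) (@class_rel_sym _ E) (@class_rel_trans _ E).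

Definition quot {X : topologicalType} (E : hrel X X) : topologicalType :=
  quotient_topology {eq_quot (class_equiv E)}.

Definition qproj {X : topologicalType} (E : hrel X X) : X -> quot E :=
  \pi_({eq_quot (class_equiv E)})%qT.

Definition Qrel {X X' : topologicalType} (E : hrel X X) (E' : hrel X' X')
  (R : hrel X X') : hrel (quot E) (quot E') :=
  rcomp (rgraph (qproj E')) (rcomp R (rconv (rgraph (qproj E)))).

Definition irreducible_map {Y X : topologicalType} (g : Y -> X) :=
  forall F : set Y, closed F -> F <> setT -> g @` F <> setT.

Definition gleason_cover {Y X : topologicalType} (g : Y -> X) :=
  [/\ compact_hausdorff Y, extremally_disconnected Y, continuous g,
      (forall x, exists y, g y = x) & irreducible_map g].

(** a (not yet certified) choice of a space over X *)
Record precover (X : topologicalType) := Precover {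
  pc_space : topologicalType;
  pc_map : pc_space -> X }.

Definition Gsp (cv : forall K : topologicalType, precover K) (K : topologicalType)
  : topologicalType := pc_space (cv K).

Definition Gmap (cv : forall K : topologicalType, precover K) (K : topologicalType)
  : Gsp cv K -> K := @pc_map K (cv K).
Arguments Gmap : clear implicits.

Definition GE (cv : forall K : topologicalType, precover K) (K : topologicalType)
  : hrel (Gsp cv K) (Gsp cv K) :=
  fun y y' => Gmap cv K y = Gmap cv K y'.

Definition Grel (cv : forall K : topologicalType, precover K) {K K' : topologicalType}
  (R : hrel K K') : hrel (Gsp cv K) (Gsp cv K') :=
  rcomp (rconv (rgraph (Gmap cv K'))) (rcomp R (rgraph (Gmap cv K))).

Arguments GE : clear implicits.
Arguments Grel cv {K K'} R.
Arguments Qrel {X X'} E E' R.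
Arguments qproj {X} E.

(* Main.v *)
Require Import Defs.
From HB Require Import structures.
From mathcomp Require Import all_boot all_order all_algebra.
From mathcomp Require Import all_classical.
From mathcomp Require Import topology quotient_topology generic_quotient.
Set Implicit Arguments. Unset Strict Implicit.
Local Open Scope classical_set_scope.

Lemma closed_eqfun (X Y Z : topologicalType) (f : X -> Z) (h : Y -> Z) :
  hausdorff_space Z -> continuous f -> continuous h ->
  closed_rel (fun a b => f a = h b).
Proof.
move=> HZ cf ch; rewrite /closed_rel closedE => -[a b] /= Hp.
apply: contrapT => Hne; apply: Hp.
move: HZ; rewrite open_hausdorff => /(_ (f a) (h b)) [].
  by apply/eqP.
move=> [U V] /=; rewrite !inE => -[fU hV] [oU oV /eqP UV0].
exists (f @^-1` U, h @^-1` V) => /=.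
  split; [apply: cf; exact: open_nbhs_nbhs|apply: ch; exact: open_nbhs_nbhs].
move=> [x y] /= [xU yV] e.
have : (U `&` V) (f x) by split => //; rewrite e.
by move/eqP: UV0 => ->.
Qed.

Lemma rimage_closed (X Y : topologicalType) (R : hrel X Y) (F : set X) :
  compact [set: X] -> closed_rel R -> closed F -> closed (rimage R F).
Proof.
move=> cX cR cF; rewrite closedE => y Hy.
have cptF : compact F by apply: (subclosed_compact cF cX).
pose S (V : set Y) := [set x | F x /\ exists2 y', V y' & R x y'].
have Hne V : nbhs y V -> S V !=set0.
  move=> Vy; apply: contrapT => /set0P/negP; rewrite negbK => /eqP S0.
  apply: Hy; apply: filterS Vy => y' Vy' [x Fx Rxy'].
  have : S V x by split => //; exists y'.
  by rewrite S0.
have FF : Filter (filter_from (nbhs y) S).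
  apply: filter_from_filter; first by exists setT; exact: filterT.
  move=> V V' nV nV'; exists (V `&` V'); first exact: filterI.
  by move=> x [Fx [y' [Vy' V'y'] Rxy']]; split; split => //; exists y'.
have PF := filter_from_proper FF Hne.
have FS : filter_from (nbhs y) S F by exists setT; [exact: filterT|move=> x []].
have [x [Fx clx]] := cptF _ PF FS.
exists x => //.
move: cR; rewrite /closed_rel closedE => /(_ (x, y)); apply => /= H.
case: H => -[U V] /= [Ux Vy] UV.
have [x' [[Fx' [y' Vy' Rxy']] Ux']] := clx (S V) U (ltac:(by exists V)) Ux.
by apply: (UV (x', y')).
Qed.

Section Q.
Variables (X : topologicalType) (E : hrel X X).

Lemma qprojP (eqE : Defs.equivalence_rel E) x y : qproj E x = qproj E y <-> E x y.
Proof.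
case: eqE => Er Es Et.
rewrite /qproj; split.
  move/eqquotP => /asboolP /(_ y) [_]; apply; exact: Er.
move=> Exy; apply/eqquotP; apply/asboolP => z; split.
  by move=> Exz; apply: Et (Es _ _ Exy) Exz.
by move=> Eyz; apply: Et Exy Eyz.
Qed.

Lemma qproj_surj (q : quot E) : exists x, qproj E x = q.
Proof. by exists (repr q); rewrite /qproj reprK. Qed.

Lemma qproj_cont : continuous (qproj E).
Proof. exact: pi_continuous. Qed.

Lemma quot_openP (U : set (quot E)) : open U <-> open (qproj E @^-1` U).
Proof. by []. Qed.
End Q.

Lemma quot_hausdorff (X : topologicalType) (E : hrel X X) :
  compact_hausdorff X -> closed_rel E -> Defs.equivalence_rel E ->
  hausdorff_space (quot E).
Proof.
move=> [cX hX] cE eqE; have [Er Es Et] := eqE.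
pose sat (U : set X) := ~` rimage E (~` U).
have sat_open U : open U -> open (sat U).
  move=> oU; apply: closed_openC; apply: rimage_closed => //.
  exact: open_closedC.
have sat_sub U : sat U `<=` U.
  move=> z sz; apply: contrapT => nUz; apply: sz; exists z => //; exact: Er.
have sat_in U x : (forall z, E x z -> U z) -> sat U x.
  move=> H [w nUw Ewx]; apply: nUw; apply: H; exact: Es.
have sat_E U z z' : E z z' -> sat U z -> sat U z'.
  move=> Ezz' sz [w nUw Ewz']; apply: sz; exists w => //.
  exact: Et Ewz' (Es _ _ Ezz').
have sat_pre U : qproj E @^-1` (qproj E @` sat U) = sat U.
  apply/seteqP; split => x /=.
    by case=> z sz /(qprojP eqE) Ezx; exact: sat_E Ezx sz.
  by move=> sx; exists x.
have satq_open U : open U -> open (qproj E @` sat U).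
  by move=> oU; apply/quot_openP; rewrite sat_pre; exact: sat_open.
rewrite open_hausdorff => q1 q2.
have [x1 <-] := qproj_surj q1; have [x2 <-] := qproj_surj q2.
move=> /eqP neq.
have nE : ~ E x1 x2 by move/(qprojP eqE).
pose A := rimage E [set x1]; pose B := rimage E [set x2].
have cl1 (x : X) : closed [set x] by exact: (@accessible_closed_set1 _ (hausdorff_accessible hX) x).
have cA : closed A by apply: rimage_closed.
have cB : closed B by apply: rimage_closed.
have AB z : A z -> B z -> False.
  move=> [_ -> e1] [_ -> e2]; apply: nE; exact: Et e1 (Es _ _ e2).
have nX := compact_normal hX cX.
have snB : set_nbhs A (~` B).
  apply/set_nbhsP; exists (~` B); split.
  - exact: closed_openC.
  - by move=> z Az Bz; exact: AB Az Bz.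
  - by [].
have [W /set_nbhsP [C [oC AC CW]] clW] := compact_normal hX cX cA snB.
pose V := ~` closure C.
have oV : open V by apply: closed_openC; exact: closed_closure.
have BV : B `<=` V.
  move=> z Bz clz; apply: (clW z) => //; exact: (closureS CW).
exists (qproj E @` sat C, qproj E @` sat V) => /=.
  rewrite !inE; split.
    by exists x1 => //; apply: sat_in => z e; apply: AC; exists x1.
  by exists x2 => //; apply: sat_in => z e; apply: BV; exists x2.
split; [exact: satq_open|exact: satq_open|].
apply/eqP; apply/seteqP; split => // q [[z sz <-]] [z' sz' /(qprojP eqE) e].
have Cz := sat_sub _ _ sz.
have Vz : V z by apply: (sat_sub V); exact: sat_E e sz'.
by apply: Vz; exact: subset_closure.
Qed.

Lemma qproj_repr (X : topologicalType) (E : hrel X X) (q : quot E) :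
  qproj E (repr q) = q.
Proof. by rewrite /qproj reprK. Qed.

Lemma quot_compact (X : topologicalType) (E : hrel X X) :
  compact [set: X] -> compact [set: quot E].
Proof.
move=> cX; have := continuous_compact (continuous_subspaceT (@qproj_cont X E)) cX.
have -> // : qproj E @` [set: X] = [set: quot E].
apply/seteqP; split => // q _; have [x <-] := qproj_surj q; by exists x.
Qed.

Lemma quot_ch (X : topologicalType) (E : hrel X X) :
  compact_hausdorff X -> closed_rel E -> Defs.equivalence_rel E ->
  compact_hausdorff (quot E).
Proof.
move=> cX cE eqE; split; first exact: quot_compact cX.1.
exact: quot_hausdorff.
Qed.

Lemma id_cont (X : topologicalType) : continuous (fun x : X => x).
Proof. by move=> x A. Qed.

Lemma ED_td (Y : topologicalType) : hausdorff_space Y ->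
  extremally_disconnected Y -> totally_disconnected [set: Y].
Proof.
move=> hY eY; apply: zero_dimension_totally_disconnected => x y /eqP nxy.
move: hY; rewrite open_hausdorff => /(_ x y) [].
  by apply/eqP.
move=> [U V] /=; rewrite !inE => -[Ux Vy] [oU oV /eqP UV0].
exists (closure U); split.
- by split; [exact: eY|exact: closed_closure].
- exact: subset_closure.
- move=> clU; have [z [Uz Vz]] := clU V (open_nbhs_nbhs (conj oV Vy)).
  by have : (U `&` V) z by []; move/eqP: UV0 => ->.
Qed.

Lemma gleason_GE (cv : forall K : topologicalType, precover K)
  (Hcv : forall K : topologicalType, compact_hausdorff K ->
           gleason_cover (@pc_map K (cv K))) (K : topologicalType) :
  compact_hausdorff K -> Gleason_space (GE cv K).
Proof.
move=> chK; have [chY eY Hgc Hgs Hgi] := Hcv K chK.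
split => //.
  split.
  - by split => //; apply: ED_td => //; exact: (chY.2).
  - exact: (closed_eqfun chK.2 Hgc Hgc).
  - by split => [x|x y|x y z]; rewrite /GE; [by []|by move->|by move=> -> ->].
move=> F cF nF eF; apply: (Hgi F cF nF).
apply/seteqP; split => // k _; have [y gy] := Hgs k.
have : rimage (GE cv K) F y by rewrite eF.
by case=> x Fx e; exists x => //; rewrite -gy.
Qed.

Lemma hom_gen (X Y Z : topologicalType) (E : hrel X X) (F : hrel Y Y)
  (p : X -> Z) (g : Y -> Z) :
  hausdorff_space Z -> continuous p -> continuous g ->
  (forall x x', E x x' <-> p x = p x') -> (forall y y', F y y' <-> g y = g y') ->
  StoneE_hom E F (fun x y => p x = g y).
Proof.
move=> hZ cp cg HE HF; split.
- exact: closed_eqfun.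
- move=> x y; split.
    by case=> x' [/HE -> ->].
  by move=> e; exists x; split => //; apply/HE.
- move=> x y; split.
    by case=> y' [-> /HF ->].
  by move=> e; exists y; split => //; apply/HF.
Qed.

Lemma iso_gen (X Y Z : topologicalType) (E : hrel X X) (F : hrel Y Y)
  (R : hrel X Y) (p : X -> Z) (g : Y -> Z) :
  hausdorff_space Z -> continuous p -> continuous g ->
  (forall z, exists x, p x = z) -> (forall z, exists y, g y = z) ->
  (forall x x', E x x' <-> p x = p x') -> (forall y y', F y y' <-> g y = g y') ->
  (forall x y, R x y <-> p x = g y) ->
  StoneE_iso E F R.
Proof.
move=> hZ cp cg sp sg HE HF HR.
have -> : R = (fun x y => p x = g y).
  by apply/funext => x; apply/funext => y; apply/propext; exact: HR.
split; first exact: hom_gen.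
exists (fun y x => g y = p x); split.
- exact: hom_gen.
- move=> x x'; split.
    by case=> y [e1 e2]; apply/HE; rewrite e1 e2.
  move/HE => e; have [y gy] := sg (p x); exists y; split => //.
  by rewrite gy.
- move=> y y'; split.
    by case=> x [e1 e2]; apply/HF; rewrite e1 e2.
  move/HF => e; have [x px] := sp (g y); exists x; split => //.
  by rewrite px.
Qed.

Lemma khaus_of_iso (X Y : topologicalType) (R : hrel X Y) :
  StoneE_iso (@rdiag X) (@rdiag Y) R -> KHaus_iso R.
Proof.
case=> -[cR _ _] [S [[cS _ _] e1 e2]]; split => //; by exists S.
Qed.

Lemma qE (X : topologicalType) (E : hrel X X) : Defs.equivalence_rel E ->
  forall x x', E x x' <-> qproj E x = qproj E x'.
Proof. by move=> eqE x x'; apply: iff_sym; apply: qprojP. Qed.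

Lemma chQ (X : topologicalType) (E : hrel X X) : StoneE_obj E -> compact_hausdorff (quot E).
Proof. by move=> [[chX _] cE eqE]; exact: quot_ch. Qed.

Unset Implicit Arguments.
Set Strict Implicit.

Theorem theorem4p6
  (cv : forall K : topologicalType, precover K)
  (Hcv : forall K : topologicalType, compact_hausdorff K ->
           gleason_cover (@pc_map K (cv K))) :
  (* (1) every object (X,E) of StoneE^R is isomorphic to the Gleason space G(X/E) *)
  (forall (X : topologicalType) (E : hrel X X), StoneE_obj E ->
     Gleason_space (GE cv (quot E)) /\
     exists R : hrel X (Gsp cv (quot E)), StoneE_iso E (GE cv (quot E)) R)
  /\
  (* (2a) Q lands in KHaus^R, and id_{Gle^R} ≅ G ∘ Q naturally *)
  (forall (X : topologicalType) (E : hrel X X), Gleason_space E ->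
     compact_hausdorff (quot E))
  /\
  (exists alpha : forall (X : topologicalType) (E : hrel X X),
                    hrel X (Gsp cv (quot E)),
     (forall (X : topologicalType) (E : hrel X X), Gleason_space E ->
        StoneE_iso E (GE cv (quot E)) (alpha X E)) /\
     (forall (X X' : topologicalType) (E : hrel X X) (E' : hrel X' X')
             (R : hrel X X'),
        Gleason_space E -> Gleason_space E' -> StoneE_hom E E' R ->
        releq (rcomp (Grel cv (Qrel E E' R)) (alpha X E))
              (rcomp (alpha X' E') R)))
  /\
  (* (2b) G lands in Gle^R, and id_{KHaus^R} ≅ Q ∘ G naturally *)
  (forall X : topologicalType, compact_hausdorff X -> Gleason_space (GE cv X))
  /\
  (exists beta : forall X : topologicalType, hrel X (quot (GE cv X)),
     (forall X : topologicalType, compact_hausdorff X -> KHaus_iso (beta X)) /\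
     (forall (X X' : topologicalType) (R : hrel X X'),
        compact_hausdorff X -> compact_hausdorff X' -> closed_rel R ->
        releq (rcomp (Qrel (GE cv X) (GE cv X') (Grel cv R)) (beta X))
              (rcomp (beta X') R)))
  /\
  (* (3) the inclusion Gle^R -> StoneE^R (full, faithful, identity on
     hom-sets, meets and converses) is essentially surjective, hence an
     equivalence of allegories *)
  (forall (X : topologicalType) (E : hrel X X), StoneE_obj E ->
     exists (Y : topologicalType) (F : hrel Y Y) (R : hrel X Y),
       Gleason_space F /\ StoneE_iso E F R).
Proof.
have isoQ : forall (X : topologicalType) (E : hrel X X), StoneE_obj E ->
   StoneE_iso E (GE cv (quot E)) (fun x y => qproj E x = Gmap cv (quot E) y).
  move=> X E oE; have chq := chQ oE; have [_ _ cg sg _] := Hcv _ chq.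
  have [_ _ eqE] := oE.
  apply: (@iso_gen _ _ _ _ _ _ (qproj E) (Gmap cv (quot E))) => //.
  - exact: chq.2.
  - exact: qproj_cont.
  - exact: qproj_surj.
  - exact: qE.
split.
  move=> X E oE; split; first exact: gleason_GE (chQ oE).
  by exists (fun x y => qproj E x = Gmap cv (quot E) y); exact: isoQ.
split.
  by move=> X E [oE _ _]; exact: chQ.
split.
  exists (fun X E x y => qproj E x = Gmap cv (quot E) y); split.
    by move=> X E [oE _ _]; exact: isoQ.
  move=> X X' E E' R [oE _ _] [oE' _ _] [_ hRE _] x y'.
  have [_ _ eqE] := oE.
  have [_ _ _ sg _] := Hcv _ (chQ oE).
  rewrite /rcomp /Grel /Qrel /rcomp /rconv /Defs.rgraph; split.
    case=> y [e1 [k [[k0 [e2 [x2 [[x1 [e3 Rx]] e4]]]] e5]]].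
    exists x2; split; last by rewrite e4 e5.
    apply/hRE; exists x1; split => //; apply/(qE eqE).
    by rewrite e1 e2 e3.
  case=> x2 [Rx e]; have [y gy] := sg (qproj E x).
  exists y; split; first by rewrite -gy.
  exists (qproj E' x2); split; last by rewrite e.
  exists (Gmap cv (quot E) y); split => //.
  exists x2; split => //; exists x; split => //.
split.
  by move=> X chX; exact: gleason_GE.
split.
  have aux : forall K : topologicalType, compact_hausdorff K ->
    Defs.equivalence_rel (GE cv K) /\
    forall y, Gmap cv K (repr (qproj (GE cv K) y)) = Gmap cv K y.
    move=> K chK.
    have eqG : Defs.equivalence_rel (GE cv K).
      by split => [a|a b|a b c]; rewrite /GE; [by []|by move->|by move=> -> ->].
    split => // y; exact: ((qprojP eqG (repr (qproj _ y)) y).1 (qproj_repr _)).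
  exists (fun X x q => x = Gmap cv X (repr q)); split.
    move=> X chX; apply: khaus_of_iso.
    have [_ _ cg sg _] := Hcv _ chX.
    have [eqG hq] := aux X chX.
    apply: (@iso_gen _ _ _ (@rdiag X) (@rdiag (quot (GE cv X))) _ (fun x => x) (fun q => Gmap cv X (repr q))).
    - exact: chX.2.
    - exact: id_cont.
    - apply: (repr_comp_continuous cg) => a b /eqP /(qprojP eqG) e.
      by apply/eqP.
    - by move=> z; exists z.
    - by move=> x; have [y gy] := sg x; exists (qproj _ y); rewrite hq.
    - by [].
    - move=> q q'; split; first by move->.
      move=> e; have := (qprojP eqG (repr q) (repr q')).2 e.
      by rewrite !qproj_repr.
    - by [].
  move=> X X' R chX chX' cR x q'.
  have [_ _ cg sg _] := Hcv _ chX.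
  have [eqG hq] := aux X chX.
  have [eqG' hq'] := aux X' chX'.
  rewrite /rcomp /Grel /Qrel /rcomp /rconv /Defs.rgraph; split.
    case=> q [ex [y2 [[y1 [e1 [k [[k0 [e2 Rk]] e3]]]] e4]]].
    exists k; split; last by rewrite -e4 hq' e3.
    have -> : x = k0 by rewrite ex -e1 hq e2.
    exact: Rk.
  case=> x' [Rx e]; have [y1 gy] := sg x.
  exists (qproj _ y1); split; first by rewrite hq -gy.
  exists (repr q'); split; last exact: qproj_repr.
  exists y1; split => //.
  exists x'; split; last by rewrite e.
  by exists x; split.
move=> X E oE; exists (Gsp cv (quot E)), (GE cv (quot E)).
exists (fun x y => qproj E x = Gmap cv (quot E) y); split.
  exact: gleason_GE (chQ oE).
exact: isoQ.
Qed.
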